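(* Let $d\ge1$, let $X$ be a lazy simple random walk on $\mathbb{Z}^d$ started at $0$, and let $(D_s)_{s\ge0}$ be subsets of $\mathbb{Z}^d$ symmetric about the origin, i.e. $D_s=-D_s$ for all $s$. If $\sigma$ is a reflection of $\mathbb{Z}^d$ (with specified half-spaces $H^+,H^-$), then for all $t\ge0$, \[ \mathbb{E}\Big[\mathrm{vol}\Big(\bigcup_{s=0}^t(X_s+D_s)\Big)\Big]\ \ge\ \mathbb{E}\Big[\mathrm{vol}\Big(\bigcup_{s=0}^t(X_s+D_s^\sigma)\Big)\Big]. \]
   Context: $\mathbb{Z}^d$ carries the nearest-neighbour graph ($\ell^1$) distance. A reflection of a metric space $(M,d)$ is an isometry $\sigma:M\to M$ together with a decomposition $M=H^0\sqcup H^+\sqcup H^-$ such that $\sigma^2x=x$ for all $x$, $H^0$ is the set of fixed points of $\sigma$, $\sigma H^+=H^-$, and $d(x,y)<d(x,\sigma y)$ for all $x,y\in H^+$. The two-point rearrangement $A^\sigma$ of $A\subseteq M$ is defined by $A^\sigma\cap H^+=(A\cup\sigma A)\cap H^+$, $A^\sigma\cap H^-=(A\cap\sigma A)\cap H^-$, $A^\sigma\cap H^0=A\cap H^0$. The lazy simple random walk stays put with probability $1/2$ and otherwise moves from $x$ to $x\pm e_i$, each with probability $1/(4d)$. $\mathrm{vol}(S)$ is the cardinality of $S$ and $x+S=\{x+y:y\in S\}$. *)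

(* Defs.v *)
From HB Require Import structures.
From mathcomp Require Import all_boot all_order all_algebra.
From mathcomp Require Import boolp classical_sets reals ereal counting_measure.
Set Implicit Arguments. Unset Strict Implicit. Unset Printing Implicit Defensive.
Import Order.TTheory GRing.Theory Num.Theory.
Local Open Scope classical_set_scope.
Local Open Scope ring_scope.

Definition Zd (d : nat) := 'rV[int]_d.

Definition dist1 (d : nat) (x y : Zd d) : nat := (\sum_(i < d) `|x ord0 i - y ord0 i|%N)%N.

Definition is_reflection (d : nat) (sigma : Zd d -> Zd d) (H0 Hp Hm : set (Zd d)) : Prop :=
  (forall x y, dist1 (sigma x) (sigma y) = dist1 x y) /\
  (forall x, sigma (sigma x) = x) /\
  (H0 `|` Hp `|` Hm = setT /\ H0 `&` Hp = set0 /\ H0 `&` Hm = set0 /\ Hp `&` Hm = set0) /\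
  H0 = [set x | sigma x = x] /\
  sigma @` Hp = Hm /\
  (forall x y, Hp x -> Hp y -> (dist1 x y < dist1 x (sigma y))%N).

Definition two_point (d : nat) (sigma : Zd d -> Zd d) (H0 Hp Hm : set (Zd d))
    (A : set (Zd d)) : set (Zd d) :=
  ((A `|` sigma @` A) `&` Hp) `|` ((A `&` sigma @` A) `&` Hm) `|` (A `&` H0).

Definition translate (d : nat) (x : Zd d) (S : set (Zd d)) : set (Zd d) :=
  [set x + y | y in S].

Definition negset (d : nat) (S : set (Zd d)) : set (Zd d) := [set - y | y in S].

Definition vol (R : realType) (d : nat) (S : set (Zd d)) : \bar R := counting S.

(* Steps of the lazy simple random walk: None = stay put,
   Some (i, b) = move by +e_i (b = true) or -e_i (b = false). *)
Definition step (d : nat) := option ('I_d * bool).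

Definition step_vec (d : nat) (u : step d) : Zd d :=
  match u with
  | None => 0
  | Some (i, b) => (if b then 1 else -1) *: delta_mx ord0 i
  end.

Definition step_prob (R : realType) (d : nat) (u : step d) : R :=
  match u with
  | None => 1 / 2
  | Some _ => 1 / (4 * d%:R)
  end.

Definition walk_pos (d t : nat) (w : {ffun 'I_t -> step d}) (s : nat) : Zd d :=
  \sum_(k < t | (k < s)%N) step_vec (w k).

Definition path_prob (R : realType) (d t : nat) (w : {ffun 'I_t -> step d}) : R :=
  \prod_(k < t) step_prob R (w k).

(* E[ vol( \bigcup_{s=0}^t (X_s + D_s) ) ] for the lazy SRW X started at 0;
   the law of (X_0,...,X_t) is that of the partial sums of t i.i.d. steps. *)
Definition expected_range_vol (R : realType) (d t : nat) (D : nat -> set (Zd d)) : \bar R :=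
  (\sum_(w : {ffun 'I_t -> step d})
     (path_prob R w)%:E *
     vol R (\bigcup_(s in [set s : nat | (s <= t)%N]) translate (walk_pos w s) (D s)))%E.

(* Main.v *)
Require Import Defs.
From HB Require Import structures.
From mathcomp Require Import all_boot all_order all_algebra.
From mathcomp Require Import boolp classical_sets reals ereal counting_measure.
From mathcomp Require Import finmap lra cardinality.
Import Order.TTheory GRing.Theory Num.Theory.
Local Open Scope classical_set_scope.
Local Open Scope ring_scope.
Set Implicit Arguments. Unset Strict Implicit. Unset Printing Implicit Defensive.

Section Steps.
Variable d : nat.

Lemma step_vecE (u : step d) j :
  step_vec u ord0 j = match u with None => 0 | Some (i, b) => (i == j)%:R * (if b then 1 else -1) end.
Proof.
case: u => [[i b]|]; rewrite /step_vec !mxE //.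
by rewrite mulrC eqxx /= eq_sym.
Qed.

Lemma dist1_step (x : Zd d) u :
  dist1 x (x - step_vec u) = if u is None then 0%N else 1%N.
Proof.
have -> : dist1 x (x - step_vec u) = (\sum_j absz (step_vec u ord0 j))%N.
  apply: eq_bigr => j _; congr absz; rewrite !mxE.
  by rewrite opprB addrC subrK.
case: u => [[i b]|].
  rewrite (bigD1 i) // big1 ?addn0.
    by rewrite step_vecE eqxx mul1r; case: b.
  by move=> j /negbTE ji; rewrite step_vecE eq_sym ji mul0r.
by rewrite big1 // => j _; rewrite step_vecE.
Qed.

Lemma step_vec_inj : injective (@step_vec d).
Proof.
have nz i b : step_vec (Some (i, b)) != 0 :> Zd d.
  apply/eqP => /matrixP /(_ ord0 i); rewrite step_vecE mxE eqxx mul1r.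
  by case: b.
move=> [[i b]|] [[j c]|] //.
- move=> /matrixP E.
  have := E ord0 i; rewrite !step_vecE eqxx mul1r.
  case: (eqVneq j i) => [->|ji].
    by rewrite mul1r; clear E; case: b; case: c.
  by rewrite mul0r; clear E; case: b.
- by move=> E; move: (nz i b); rewrite E eqxx.
- by move=> E; move: (nz j c); rewrite -E eqxx.
Qed.

Lemma dist1_eq0 (x y : Zd d) : dist1 x y = 0%N -> x = y.
Proof.
move=> /eqP; rewrite /dist1 sum_nat_eq0 => /forallP H.
apply/matrixP => i j; rewrite (ord1 i).
by have := H j; rewrite implyTb absz_eq0 subr_eq0 => /eqP.
Qed.

Lemma dist1_eq1 (x y : Zd d) : dist1 x y = 1%N -> exists u, y = x - step_vec u.
Proof.
move=> H.
have [i Hi]: exists i, (0 < `|x ord0 i - y ord0 i|)%N.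
  apply/existsP; apply: contraT; rewrite negb_exists => /forallP H0.
  move: H; rewrite /dist1 big1 // => j _.
  by have := H0 j; rewrite lt0n negbK => /eqP.
move: H; rewrite /dist1 (bigD1 i) //=.
set r := (\sum_(j | _) _)%N => H.
have r0 : r = 0%N by move: Hi H; case: (`|_|%N) => // n; case: n => // n; case: r.
have ai : `|x ord0 i - y ord0 i|%N = 1%N by move: H; rewrite r0 addn0.
have oth j : j != i -> x ord0 j = y ord0 j.
  move=> ji; move/eqP: r0; rewrite /r sum_nat_eq0 => /forallP /(_ j).
  by rewrite ji implyTb absz_eq0 subr_eq0 => /eqP.
have [b Hb] : exists b : bool, x ord0 i - y ord0 i = (if b then 1 else -1).
  move: ai; case: (x ord0 i - y ord0 i) => [n|n] /=.
    by move=> ->; exists true.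
  by case: n => // _; exists false.
exists (Some (i, b)); apply/matrixP => k j; rewrite (ord1 k) !mxE eqxx /=.
case: (eqVneq j i) => [->|ij].
  by rewrite mulr1 -Hb opprB addrC subrK.
by rewrite mulr0 subr0 oth.
Qed.

End Steps.

Section Refl.
Variables (R : realType) (d : nat) (hd : (0 < d)%N) (sigma : Zd d -> Zd d) (H0 Hp Hm : set (Zd d)).
Hypothesis hrefl : is_reflection sigma H0 Hp Hm.

Lemma sK x : sigma (sigma x) = x.
Proof. by case: hrefl => _ [h _]. Qed.

Lemma sdist x y : dist1 (sigma x) (sigma y) = dist1 x y.
Proof. by case: hrefl => h _. Qed.

Lemma part x : H0 x \/ Hp x \/ Hm x.
Proof.
case: hrefl => _ [_ [[hU _] _]].
have : (H0 `|` Hp `|` Hm) x by rewrite hU.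
by case=> [[h|h]|h]; tauto.
Qed.

Lemma disj0p x : H0 x -> Hp x -> False.
Proof.
case: hrefl => _ [_ [[_ [h _]] _]] a b.
by have : (H0 `&` Hp) x by []; rewrite h.
Qed.
Lemma disj0m x : H0 x -> Hm x -> False.
Proof.
case: hrefl => _ [_ [[_ [_ [h _]]] _]] a b.
by have : (H0 `&` Hm) x by []; rewrite h.
Qed.
Lemma disjpm x : Hp x -> Hm x -> False.
Proof.
case: hrefl => _ [_ [[_ [_ [_ h]]] _]] a b.
by have : (Hp `&` Hm) x by []; rewrite h.
Qed.

Lemma H0s x : H0 x -> sigma x = x.
Proof. by case: hrefl => _ [_ [_ [h _]]]; rewrite h. Qed.
Lemma sH0 x : sigma x = x -> H0 x.
Proof. by case: hrefl => _ [_ [_ [h _]]]; rewrite h. Qed.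

Lemma HpHm x : Hp x -> Hm (sigma x).
Proof. by case: hrefl => _ [_ [_ [_ [h _]]]] hx; rewrite -h; exists x. Qed.

Lemma HmHp x : Hm x -> Hp (sigma x).
Proof.
case: hrefl => _ [_ [_ [_ [h _]]]]; rewrite -h => -[y hy <-].
by rewrite sK.
Qed.

Lemma Hp_dist x y : Hp x -> Hp y -> (dist1 x y < dist1 x (sigma y))%N.
Proof. by case: hrefl => _ [_ [_ [_ [_ h]]]]; apply: h. Qed.

Lemma Hm_dist x y : Hm x -> Hm y -> (dist1 x y < dist1 x (sigma y))%N.
Proof.
move=> hx hy.
have := Hp_dist (HmHp hx) (HmHp hy).
by rewrite sdist -{2}(sK y) sdist sK.
Qed.

Definition sp (u : step d) : R := step_prob R u.

Lemma sp_ge0 u : 0 <= sp u.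
Proof.
by case: u => [a|]; rewrite /sp /step_prob ?mul1r invr_ge0 // mulr_ge0 // ler0n.
Qed.

Definition K (x y : Zd d) : R := \sum_(u : step d) sp u * (y == x - step_vec u)%:R.

Definition kk (n : nat) : R :=
  match n with 0%N => 1 / 2 | 1%N => 1 / (4 * d%:R) | _ => 0 end.

Lemma kk_ge0 n : 0 <= kk n.
Proof.
by case: n => [|[|n]] //=; rewrite mul1r invr_ge0 // mulr_ge0 // ler0n.
Qed.

Lemma kk_anti m n : (m <= n)%N -> kk n <= kk m.
Proof.
have h1 : 1 / (4 * d%:R) <= 1 / 2 :> R.
  rewrite !mul1r lef_pV2 ?posrE ?mulr_gt0 ?ltr0n //.
  have : 1 <= d%:R :> R by rewrite ler1n.
  lra.
case: m => [|[|m]]; case: n => [|[|n]] //= _; rewrite ?kk_ge0 ?h1 //.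
Qed.

Lemma K_step x u : K x (x - step_vec u) = sp u.
Proof.
rewrite /K (bigD1 u) //= eqxx mulr1 big1 ?addr0 // => v vu.
suff /negbTE -> : (x - step_vec u) != (x - step_vec v) by rewrite mulr0.
apply: contra vu => /eqP h; apply/eqP; apply: step_vec_inj.
by apply: oppr_inj; apply: (addrI x).
Qed.

Lemma K_dist x y : K x y = kk (dist1 x y).
Proof.
case: (pselect (exists u, y = x - step_vec u)) => [[u ->]|nex].
  rewrite K_step dist1_step.
  by case: u => [[i b]|].
rewrite /K big1; last first.
  move=> u _; case: eqP => [h|_]; last by rewrite mulr0.
  by exfalso; apply: nex; exists u.
case E: (dist1 x y) => [|[|n]] //.
- exfalso; apply: nex; exists None; rewrite (dist1_eq0 E) /=.
  by rewrite subr0.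
- by exfalso; apply: nex; apply: dist1_eq1.
Qed.

Lemma K_ge0 x y : 0 <= K x y.
Proof. by rewrite K_dist kk_ge0. Qed.

Lemma K_sigma x y : K (sigma x) (sigma y) = K x y.
Proof. by rewrite !K_dist sdist. Qed.

Lemma K_sigmal x y : K (sigma x) y = K x (sigma y).
Proof. by rewrite -{1}(sK y) K_sigma. Qed.

Lemma K_Hm x y : Hm x -> Hm y -> K x (sigma y) <= K x y.
Proof. by move=> hx hy; rewrite !K_dist kk_anti // ltnW // Hm_dist. Qed.


Lemma sinj : injective sigma.
Proof. exact: (can_inj sK). Qed.

Lemma sym_sum (S : seq (Zd d)) (F : Zd d -> R) :
  uniq S -> (forall z, z \in S -> sigma z \in S) ->
  \sum_(z <- S) F z = \sum_(z <- S) F (sigma z).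
Proof.
move=> uS cS; rewrite -(big_map sigma predT F); apply: perm_big.
apply: uniq_perm => //; first by rewrite map_inj_uniq //; exact: sinj.
move=> z; apply/idP/mapP => [zS|[w wS ->]]; last exact: cS.
by exists (sigma z); rewrite ?sK // cS.
Qed.

Lemma sym_le (S : seq (Zd d)) (F G : Zd d -> R) :
  uniq S -> (forall z, z \in S -> sigma z \in S) ->
  (forall z, z \in S -> G z + G (sigma z) <= F z + F (sigma z)) ->
  \sum_(z <- S) G z <= \sum_(z <- S) F z.
Proof.
move=> uS cS h.
have eG : \sum_(z <- S) G z + \sum_(z <- S) G z = \sum_(z <- S) (G z + G (sigma z)).
  by rewrite big_split /= -sym_sum.
have eF : \sum_(z <- S) F z + \sum_(z <- S) F z = \sum_(z <- S) (F z + F (sigma z)).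
  by rewrite big_split /= -sym_sum.
have : \sum_(z <- S) (G z + G (sigma z)) <= \sum_(z <- S) (F z + F (sigma z)).
  by rewrite big_seq_cond [X in _ <= X]big_seq_cond; apply: ler_sum => z /andP [zS _]; apply: h.
rewrite -eG -eF; lra.
Qed.

Definition Inv (f fs : Zd d -> R) :=
  [/\ (forall y, 0 <= f y), (forall y, 0 <= fs y),
      (forall y, f y + f (sigma y) <= fs y + fs (sigma y)) &
      (forall y, Hm y -> [/\ fs (sigma y) <= fs y, f y <= fs y & f (sigma y) <= fs y])].

Definition Pk (f : Zd d -> R) x := \sum_(u : step d) sp u * f (x - step_vec u).

Definition Nb (x : Zd d) := [seq x - step_vec u | u <- index_enum (step d)].
Definition SS (x : Zd d) := undup (Nb x ++ Nb (sigma x) ++ map sigma (Nb x ++ Nb (sigma x))).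

Lemma SS_uniq x : uniq (SS x).
Proof. exact: undup_uniq. Qed.

Lemma SS_closed x z : z \in SS x -> sigma z \in SS x.
Proof.
rewrite !mem_undup !mem_cat => /orP [h|/orP [h|h]].
- by rewrite map_f ?orbT // mem_cat h.
- by rewrite map_f ?orbT // mem_cat h orbT.
- move/mapP: h => [w hw ->]; rewrite sK.
  by move: hw; rewrite mem_cat => /orP [->|->]; rewrite ?orbT.
Qed.

Lemma Nb_in x u : x - step_vec u \in Nb x.
Proof. by apply: map_f; rewrite mem_index_enum. Qed.

Lemma SS_x x u : x - step_vec u \in SS x.
Proof. by rewrite mem_undup mem_cat Nb_in. Qed.

Lemma SS_sx x u : sigma x - step_vec u \in SS x.
Proof. by rewrite mem_undup !mem_cat Nb_in orbT. Qed.

Lemma sum_pred1 (S : seq (Zd d)) a (f : Zd d -> R) : uniq S -> a \in S ->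
  \sum_(y <- S) (y == a)%:R * f y = f a.
Proof.
move=> uS aS; rewrite (bigD1_seq a) //= eqxx mul1r big1 ?addr0 //.
by move=> y /negbTE ->; rewrite mul0r.
Qed.

Lemma Pk_K (S : seq (Zd d)) f x : uniq S -> (forall u, x - step_vec u \in S) ->
  Pk f x = \sum_(y <- S) K x y * f y.
Proof.
move=> uS hS; rewrite /Pk /K.
under [RHS]eq_bigr => y _ do rewrite mulr_suml.
rewrite exchange_big /=; apply: eq_bigr => u _.
under eq_bigr => y _ do rewrite -mulrA.
by rewrite -mulr_sumr sum_pred1.
Qed.

Lemma pw (al be a b xa xb : R) : 0 <= al -> 0 <= be -> 0 <= a -> 0 <= b -> 0 <= xa -> 0 <= xb ->
  a + b <= xa + xb ->
  ((be <= al /\ xb <= xa /\ a <= xa /\ b <= xa) \/ (al <= be /\ xa <= xb /\ a <= xb /\ b <= xb)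
   \/ (a = b /\ xa = xb)) ->
  [/\ al * a + be * b <= al * xa + be * xb, be * a + al * b <= al * xa + be * xb &
      be * xa + al * xb <= al * xa + be * xb].
Proof.
move=> al0 be0 a0 b0 as0 bs0 hs [[h1 [h2 [h3 h4]]]|[[h1 [h2 [h3 h4]]]|[h1 h2]]].
- split; nra.
- split; nra.
- subst; split; nra.
Qed.

Lemma Inv_Pk f fs : Inv f fs -> Inv (Pk f) (Pk fs).
Proof.
case=> f0 fs0 hsum hm.
have Pk0 g : (forall y, 0 <= g y) -> forall y, 0 <= Pk g y.
  by move=> g0 y; apply: sumr_ge0 => u _; rewrite mulr_ge0 ?sp_ge0.
have ex g x : Pk g x = \sum_(y <- SS x) K x y * g y by apply: Pk_K; [exact: SS_uniq|exact: SS_x].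
have esx g x : Pk g (sigma x) = \sum_(y <- SS x) K (sigma x) y * g y.
  by apply: Pk_K; [exact: SS_uniq|exact: SS_sx].
split; [exact: Pk0|exact: Pk0| |].
- move=> x; rewrite !esx !ex -!big_split /=.
  apply: sym_le; [exact: SS_uniq|exact: SS_closed|] => y _.
  rewrite !K_sigmal !sK.
  have := hsum y; have := K_ge0 x y; have := K_ge0 x (sigma y); nra.
- move=> x hx.
  have P y : [/\ K x y * f y + K x (sigma y) * f (sigma y) <= K x y * fs y + K x (sigma y) * fs (sigma y),
     K x (sigma y) * f y + K x y * f (sigma y) <= K x y * fs y + K x (sigma y) * fs (sigma y) &
     K x (sigma y) * fs y + K x y * fs (sigma y) <= K x y * fs y + K x (sigma y) * fs (sigma y)].
    apply: pw; rewrite ?K_ge0 ?f0 ?fs0 ?hsum //.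
    case: (part y) => [h0|[hp|hmy]].
    + by right; right; rewrite H0s.
    + right; left; have := hm _ (HpHm hp); rewrite sK => -[? ? ?]; split; last by [].
      by have := K_Hm hx (HpHm hp); rewrite sK.
    + left; case: (hm _ hmy) => ? ? ?; split; last by [].
      exact: K_Hm.
  split.
  + rewrite esx ex; apply: sym_le; [exact: SS_uniq|exact: SS_closed|] => y _.
    by rewrite !K_sigmal sK; case: (P y).
  + rewrite !ex; apply: sym_le; [exact: SS_uniq|exact: SS_closed|] => y _.
    by case: (P y).
  + rewrite esx ex; apply: sym_le; [exact: SS_uniq|exact: SS_closed|] => y _.
    by rewrite !K_sigmal sK; case: (P y).
Qed.

Definition ind (S : set (Zd d)) x : R := (`[< S x >])%:R.
Lemma indT S x : S x -> ind S x = 1.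
Proof. by move=> h; rewrite /ind asboolT. Qed.
Lemma indF S x : ~ S x -> ind S x = 0.
Proof. by move=> h; rewrite /ind asboolF. Qed.
Lemma ind_ge0 S x : 0 <= ind S x.
Proof. by rewrite /ind ler0n. Qed.

Definition rearr (S : set (Zd d)) : set (Zd d) :=
  ((S `|` sigma @` S) `&` Hm) `|` ((S `&` sigma @` S) `&` Hp) `|` (S `&` H0).

Lemma img_s (S : set (Zd d)) x : (sigma @` S) x <-> S (sigma x).
Proof.
split => [[y hy <-]|h]; first by rewrite sK.
by exists (sigma x); rewrite ?sK.
Qed.

Lemma rearr_m S y : Hm y -> rearr S y <-> S y \/ S (sigma y).
Proof.
move=> hy; split.
- case=> [[[h _]|[_ hp]]|[_ h0]].
  + by case: h => [h|/img_s h]; tauto.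
  + by exfalso; apply: (disjpm hp hy).
  + by exfalso; apply: (disj0m h0 hy).
- by move=> h; left; left; split => //; case: h => h; [left|right; apply/img_s].
Qed.

Lemma rearr_p S y : Hp y -> rearr S y <-> S y /\ S (sigma y).
Proof.
move=> hy; split.
- case=> [[[_ hm]|[[h1 /img_s h2] _]]|[_ h0]].
  + by exfalso; apply: (disjpm hy hm).
  + by [].
  + by exfalso; apply: (disj0p h0 hy).
- by case=> h1 h2; left; right; split => //; split => //; apply/img_s.
Qed.

Lemma rearr_0 S y : H0 y -> rearr S y <-> S y.
Proof.
move=> hy; split.
- case=> [[[_ hm]|[_ hp]]|[h _]] //.
  + by exfalso; apply: (disj0m hy hm).
  + by exfalso; apply: (disj0p hy hp).
- by move=> h; right.
Qed.

Lemma Inv_ind S f fs : Inv f fs ->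
  Inv (fun x => ind S x * f x) (fun x => ind (rearr S) x * fs x).
Proof.
case=> f0 fs0 hsum hm.
have key y : Hm y ->
  [/\ ind S y * f y + ind S (sigma y) * f (sigma y) <=
      ind (rearr S) y * fs y + ind (rearr S) (sigma y) * fs (sigma y),
      ind (rearr S) (sigma y) * fs (sigma y) <= ind (rearr S) y * fs y,
      ind S y * f y <= ind (rearr S) y * fs y &
      ind S (sigma y) * f (sigma y) <= ind (rearr S) y * fs y].
  move=> hy; have hpy := HmHp hy.
  have r1 := rearr_m S hy; have r2 := rearr_p S hpy; rewrite sK in r2.
  have := hsum y; case: (hm y hy) => a1 a2 a3.
  have := f0 y; have := f0 (sigma y); have := fs0 y; have := fs0 (sigma y).
  case: (pselect (S y)) => c1; case: (pselect (S (sigma y))) => c2.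
  - rewrite (indT c1) (indT c2) (indT (proj2 r1 _)) ?(indT (proj2 r2 _)); try tauto.
    move=> *; split; lra.
  - rewrite (indT c1) (indF c2) (indT (proj2 r1 _)) ?(indF (S := rearr S) (x := sigma y)); try tauto.
    move=> *; split; lra.
  - rewrite (indF c1) (indT c2) (indT (proj2 r1 _)) ?(indF (S := rearr S) (x := sigma y)); try tauto.
    move=> *; split; lra.
  - rewrite (indF c1) (indF c2) (indF (S := rearr S) (x := y)) ?(indF (S := rearr S) (x := sigma y)); try tauto.
    move=> *; split; lra.
split.
- by move=> y; rewrite mulr_ge0 ?ind_ge0.
- by move=> y; rewrite mulr_ge0 ?ind_ge0.
- move=> y; case: (part y) => [h0|[hp|hmy]].
  + rewrite H0s //; have := hsum y; rewrite H0s // => hs.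
    have r := rearr_0 S h0; have := fs0 y.
    case: (pselect (S y)) => c1.
    * by rewrite (indT c1) (indT (proj2 r c1)) => *; lra.
    * by rewrite (indF c1) (indF (S := rearr S) (x := y)) ?mul0r ?addr0 //; tauto.
  + have [k1 _ _ _] := key _ (HpHm hp); rewrite sK in k1.
    by rewrite addrC [X in _ <= X]addrC.
  + by case: (key _ hmy).
- by move=> y hy; case: (key _ hy).
Qed.

Definition av (t : nat) (C : nat -> set (Zd d)) (x : Zd d) : R :=
  \sum_(w : {ffun 'I_t -> step d}) path_prob R w *
     \prod_(s < t.+1) ind (C s) (x - walk_pos w s).

Definition fcons t (u : step d) (w : {ffun 'I_t -> step d}) : {ffun 'I_t.+1 -> step d} :=
  [ffun i => if unlift ord0 i is Some j then w j else u].
Definition ftail t (w : {ffun 'I_t.+1 -> step d}) : {ffun 'I_t -> step d} :=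
  [ffun j => w (lift ord0 j)].

Lemma sum_ffunS t (F : {ffun 'I_t.+1 -> step d} -> R) :
  \sum_(w : {ffun 'I_t.+1 -> step d}) F w =
  \sum_(u : step d) \sum_(w : {ffun 'I_t -> step d}) F (fcons u w).
Proof.
rewrite pair_big /=.
rewrite (reindex (fun p : (step d * {ffun 'I_t -> step d})%type => fcons p.1 p.2)) //=.
exists (fun w : {ffun 'I_t.+1 -> step d} => (w ord0, ftail w)) => [[u w] _|w _] /=.
  rewrite /fcons ffunE unlift_none; congr pair.
  by apply/ffunP => j; rewrite !ffunE liftK.
apply/ffunP => i; rewrite /fcons ffunE.
by case: (unliftP ord0 i) => [j ->|->]; rewrite ?ffunE.
Qed.

Lemma path_prob_fcons t u (w : {ffun 'I_t -> step d}) :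
  path_prob R (fcons u w) = sp u * path_prob R w.
Proof.
rewrite /path_prob big_ord_recl /fcons ffunE unlift_none; congr (_ * _).
by apply: eq_bigr => i _; rewrite ffunE liftK.
Qed.

Lemma walk_pos_fcons0 t u (w : {ffun 'I_t -> step d}) : walk_pos (fcons u w) 0 = 0.
Proof. by rewrite /walk_pos big_pred0. Qed.

Lemma walk_pos_fconsS t u (w : {ffun 'I_t -> step d}) s :
  walk_pos (fcons u w) s.+1 = step_vec u + walk_pos w s.
Proof.
rewrite /walk_pos big_mkcond big_ord_recl /= /fcons ffunE unlift_none.
congr (_ + _); rewrite [RHS]big_mkcond; apply: eq_bigr => i _.
by rewrite ffunE liftK /bump leq0n add1n ltnS.
Qed.

Lemma av0 C x : av 0 C x = ind (C 0%N) x.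
Proof.
rewrite /av (big_pred1 [ffun i => None]); last first.
  move=> w /=; apply/esym/eqP/ffunP => i; case: i => i hi //.
rewrite /path_prob big_ord0 mul1r big_ord1 /walk_pos big_ord0 subr0.
by [].
Qed.

Lemma avS t C x : av t.+1 C x =
  ind (C 0%N) x * \sum_(u : step d) sp u * av t (fun s => C s.+1) (x - step_vec u).
Proof.
rewrite /av sum_ffunS mulr_sumr; apply: eq_bigr => u _.
rewrite !mulr_sumr; apply: eq_bigr => w _.
rewrite path_prob_fcons big_ord_recl walk_pos_fcons0 subr0.
have -> : \prod_(i < t.+1) ind (C (lift ord0 i)) (x - walk_pos (fcons u w) (lift ord0 i)) =
          \prod_(s < t.+1) ind (C s.+1) (x - step_vec u - walk_pos w s).
  by apply: eq_bigr => i _; rewrite lift0 walk_pos_fconsS opprD addrA.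
by rewrite mulrCA -!mulrA.
Qed.

Lemma Inv_av t : forall C, Inv (av t C) (av t (fun s => rearr (C s))).
Proof.
elim: t => [|t IH] C.
  have I1 : Inv (fun=> 1) (fun=> 1) by split => // y; rewrite lexx.
  have := Inv_ind (C 0%N) I1.
  have -> : av 0 C = (fun x => ind (C 0%N) x * 1) by apply: funext => x; rewrite av0 mulr1.
  have -> : av 0 (fun s => rearr (C s)) = (fun x => ind (rearr (C 0%N)) x * 1).
    by apply: funext => x; rewrite av0 mulr1.
  by [].
have -> : av t.+1 C = (fun x => ind (C 0%N) x * Pk (av t (fun s => C s.+1)) x).
  by apply: funext => x; rewrite avS.
have -> : av t.+1 (fun s => rearr (C s)) =
    (fun x => ind (rearr (C 0%N)) x * Pk (av t (fun s => rearr (C s.+1))) x).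
  by apply: funext => x; rewrite avS.
exact: Inv_ind (Inv_Pk (IH _)).
Qed.

Lemma tp_m A y : Hm y -> two_point sigma H0 Hp Hm A y <-> A y /\ A (sigma y).
Proof.
move=> hy; split.
- case=> [[[_ hp]|[[h1 /img_s h2] _]]|[_ h0]] //.
  + by exfalso; apply: (disjpm hp hy).
  + by exfalso; apply: (disj0m h0 hy).
- by case=> h1 h2; left; right; split => //; split => //; apply/img_s.
Qed.

Lemma tp_p A y : Hp y -> two_point sigma H0 Hp Hm A y <-> A y \/ A (sigma y).
Proof.
move=> hy; split.
- case=> [[[h _]|[_ hm]]|[_ h0]].
  + by case: h => [h|/img_s h]; tauto.
  + by exfalso; apply: (disjpm hy hm).
  + by exfalso; apply: (disj0p h0 hy).
- by move=> h; left; left; split => //; case: h => h; [left|right; apply/img_s].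
Qed.

Lemma tp_0 A y : H0 y -> two_point sigma H0 Hp Hm A y <-> A y.
Proof.
move=> hy; split.
- case=> [[[_ hp]|[_ hm]]|[h _]] //.
  + by exfalso; apply: (disj0p hy hp).
  + by exfalso; apply: (disj0m hy hm).
- by move=> h; right.
Qed.

Lemma tp_compl A : ~` two_point sigma H0 Hp Hm A = rearr (~` A).
Proof.
apply: funext => y; apply: propext; rewrite /setC /=.
case: (pselect (A y)) => c1; case: (pselect (A (sigma y))) => c2.
- case: (part y) => [h|[h|h]].
  + by rewrite (propext (tp_0 A h)) (propext (rearr_0 _ h)) /setC /=; tauto.
  + by rewrite (propext (tp_p A h)) (propext (rearr_p _ h)) /setC /=; tauto.
  + by rewrite (propext (tp_m A h)) (propext (rearr_m _ h)) /setC /=; tauto.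
- case: (part y) => [h|[h|h]].
  + by rewrite (propext (tp_0 A h)) (propext (rearr_0 _ h)) /setC /=; tauto.
  + by rewrite (propext (tp_p A h)) (propext (rearr_p _ h)) /setC /=; tauto.
  + by rewrite (propext (tp_m A h)) (propext (rearr_m _ h)) /setC /=; tauto.
- case: (part y) => [h|[h|h]].
  + by rewrite (propext (tp_0 A h)) (propext (rearr_0 _ h)) /setC /=; tauto.
  + by rewrite (propext (tp_p A h)) (propext (rearr_p _ h)) /setC /=; tauto.
  + by rewrite (propext (tp_m A h)) (propext (rearr_m _ h)) /setC /=; tauto.
- case: (part y) => [h|[h|h]].
  + by rewrite (propext (tp_0 A h)) (propext (rearr_0 _ h)) /setC /=; tauto.
  + by rewrite (propext (tp_p A h)) (propext (rearr_p _ h)) /setC /=; tauto.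
  + by rewrite (propext (tp_m A h)) (propext (rearr_m _ h)) /setC /=; tauto.
Qed.

Definition U t (A : nat -> set (Zd d)) (w : {ffun 'I_t -> step d}) : set (Zd d) :=
  \bigcup_(s in [set s : nat | (s <= t)%N]) translate (walk_pos w s) (A s).
Arguments U : clear implicits.

Lemma U_mem t A w z : U t A w z <-> exists s, (s < t.+1)%N /\ A s (z - walk_pos w s).
Proof.
split.
- case=> s hs [y hy <-]; exists s; split => //.
  by rewrite addrAC subrr add0r.
- case=> s [hs h]; exists s => //; exists (z - walk_pos w s) => //.
  by rewrite addrC subrK.
Qed.

Lemma hit_prod t A w z :
  ind (U t A w) z = 1 - \prod_(s < t.+1) ind (~` A s) (z - walk_pos w s).
Proof.
case: (pselect (U t A w z)) => h.
- rewrite indT //; move/U_mem: h => -[s [hs hA]].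
  rewrite (bigD1 (Ordinal hs)) //= indF ?mul0r ?subr0 //.
- rewrite indF // big1 ?subrr // => s _; apply: indT => hA.
  by apply: h; apply/U_mem; exists s; split.
Qed.

Lemma count_sum (V : set (Zd d)) (F : seq (Zd d)) : finite_set V -> uniq F ->
  (forall z, V z -> z \in F) -> counting V = (\sum_(z <- F) ind V z)%:E.
Proof.
move=> fV uF VF; rewrite /counting asboolT //; congr EFin.
rewrite card_fset_sum1 natr_sum.
have -> : \sum_(z <- F) ind V z = \sum_(z <- F | `[< V z >]) 1%:R.
  by rewrite [RHS]big_mkcond; apply: eq_bigr => z _; rewrite /ind; case: asboolP.
rewrite -[RHS]big_filter; apply: perm_big; apply: uniq_perm.
- exact: fset_uniq.
- by rewrite filter_uniq.
- move=> z; rewrite mem_filter in_fset_set //.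
  apply/idP/andP => [/set_mem h|[/asboolP h _]]; last exact: mem_set.
  by split; [apply/asboolP|apply: VF].
Qed.

Lemma sp_gt0 u : 0 < sp u.
Proof.
case: u => [a|]; rewrite /sp /step_prob ?mul1r ?invr_gt0 //.
by rewrite mulr_gt0 // ltr0n.
Qed.

Lemma path_prob_gt0 t (w : {ffun 'I_t -> step d}) : 0 < path_prob R w.
Proof. by apply: prodr_gt0 => i _; exact: (sp_gt0 (w i)). Qed.

Lemma finU t A : (forall s, (s <= t)%N -> finite_set (A s)) ->
  forall w, finite_set (U t A w).
Proof.
move=> fA w; apply: bigcup_finite.
  apply: (@sub_finite_set _ _ `I_t.+1); last exact: finite_II.
  by move=> s /= hs; rewrite ltnS.
by move=> s hs; apply: finite_image; apply: fA.
Qed.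

Lemma main_sec (D : nat -> set (Zd d)) t :
  (expected_range_vol R t (fun s => two_point sigma H0 Hp Hm (D s)) <=
   expected_range_vol R t D)%E.
Proof.
set Ds := fun s => two_point sigma H0 Hp Hm (D s).
have EV A : expected_range_vol R t A =
   (\sum_(w : {ffun 'I_t -> step d}) (path_prob R w)%:E * counting (U t A w))%E by [].
case: (pselect (forall s, (s <= t)%N -> finite_set (D s))) => fin; last first.
  move/existsNP: fin => [s0 /not_implyP [hs0 nf]].
  have inf w : counting (U t D w) = +oo%E.
    rewrite /counting asboolF // => fU; apply: nf.
    apply: (sub_finite_set _ (finite_image (fun y => y - walk_pos w s0) fU)).
    move=> y hy; exists (walk_pos w s0 + y); last by rewrite addrAC subrr add0r.
    by exists s0 => //; exists y.
  rewrite [X in (_ <= X)%E]EV [X in (_ <= X)%E](_ : _ = +oo%E) ?leey //.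
  under eq_bigr => w _ do rewrite inf gt0_muley ?lte_fin ?path_prob_gt0 //.
  rewrite (bigD1 [ffun=> None]) //=.
  set S := (\sum_(i | _) _)%E.
  have S0 : (0 <= S)%E by apply: sume_ge0 => *; exact: le0y.
  rewrite addye //; apply: contraTN S0 => /eqP ->.
  by rewrite -ltNge ltNy0.
have finDs s : (s <= t)%N -> finite_set (Ds s).
  move=> hs; apply: (@sub_finite_set _ _ (D s `|` sigma @` D s)).
    move=> y [[[h _]|[[h _] _]]|[h _]]; by [left|left|left] || (case: h => h; by [left|right]).
  by rewrite finite_setU; split; [apply: fin|apply: finite_image; apply: fin].
set Big := \bigcup_(w in [set: {ffun 'I_t -> step d}]) (U t D w `|` U t Ds w).
have fBig : finite_set Big.
  apply: bigcup_finite; first exact: finite_finset.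
  by move=> w _; rewrite finite_setU; split; exact: finU.
set Lb := (fset_set Big : seq _).
set F := undup (Lb ++ map sigma Lb).
have uF : uniq F by exact: undup_uniq.
have cF z : z \in F -> sigma z \in F.
  rewrite !mem_undup !mem_cat => /orP [h|/mapP [w hw ->]].
  - by rewrite map_f ?orbT.
  - by rewrite sK hw.
have inF A w z : (A = D \/ A = Ds) -> U t A w z -> z \in F.
  move=> hA hz; rewrite mem_undup mem_cat; apply/orP; left.
  rewrite /Lb in_fset_set //; apply: mem_set; exists w => //.
  by case: hA hz => -> hz; [left|right].
rewrite !EV.
under eq_bigr => w _ do rewrite (count_sum (finU finDs w) uF (inF Ds w ^~ (or_intror erefl))).
under [X in (_ <= X)%E]eq_bigr => w _ do
  rewrite (count_sum (finU fin w) uF (inF D w ^~ (or_introl erefl))).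
under eq_bigr => w _ do rewrite -EFinM.
under [X in (_ <= X)%E]eq_bigr => w _ do rewrite -EFinM.
rewrite !sumEFin lee_fin.
set Pt := \sum_(w : {ffun 'I_t -> step d}) path_prob R w.
have key A : \sum_(w : {ffun 'I_t -> step d}) path_prob R w * \sum_(z <- F) ind (U t A w) z =
    \sum_(z <- F) (Pt - av t (fun s => ~` A s) z).
  under eq_bigr => w _ do rewrite mulr_sumr.
  rewrite exchange_big /=; apply: eq_bigr => z _.
  rewrite /av /Pt -sumrB; apply: eq_bigr => w _.
  by rewrite hit_prod mulrBr mulr1.
rewrite !key.
have -> : (fun s => ~` Ds s) = (fun s => rearr (~` D s)).
  by apply: funext => s; rewrite /Ds tp_compl.
have h : \sum_(z <- F) av t (fun s => ~` D s) z <= \sum_(z <- F) av t (fun s => rearr (~` D s)) z.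
  apply: sym_le => // z _.
  by case: (Inv_av t (fun s => ~` D s)).
rewrite !sumrB; lra.
Qed.
End Refl.

Theorem lemma3p3 (R : realType) (d : nat) (hd : (1 <= d)%N)
  (D : nat -> set (Zd d)) (hsym : forall s, D s = negset (D s))
  (sigma : Zd d -> Zd d) (H0 Hp Hm : set (Zd d))
  (hrefl : is_reflection sigma H0 Hp Hm) (t : nat) :
  (expected_range_vol R t (fun s => two_point sigma H0 Hp Hm (D s))
     <= expected_range_vol R t D)%E.
Proof. exact: (@main_sec R d hd sigma H0 Hp Hm hrefl D t). Qed.
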